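(* For each integer $r\geq 2$ let $\mathfrak{C}_r$ be the structure $(\mathbb{Z};0,+,\leq,P_2^r)$ in the language $\{0,+,\leq,R_2\}$, where $R_2$ is a unary relation symbol interpreted as $P_2^r(x)$: ''$x$ is the square of an integer and $r$ does not divide $x$''. Then there is a single positive existential formula in the language $\{0,+,R_2\}$ which, in every structure $\mathfrak{C}_r$ with $r\geq 2$, defines the relation $\leq$ on $\mathbb{Z}$. (That is, $\leq$ is uniformly positive existentially $\{0,+,R_2\}$-definable in the class $\{\mathfrak{C}_r : r\geq 2\}$.) *)

(* Defs.v *)
From Stdlib Require Import ZArith.
Open Scope Z_scope.

(* Terms of the language {0, +}; variables are de Bruijn-style indices. *)
Inductive term : Type :=
  | tvar : nat -> term
  | tzero : term
  | tplus : term -> term -> term.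

Inductive pef : Type :=
  | feq : term -> term -> pef
  | fR2 : term -> pef
  | fand : pef -> pef -> pef
  | for_ : pef -> pef -> pef
  | fex : pef -> pef.  (* binds variable 0; old variable n becomes n+1 *)

Fixpoint teval (e : nat -> Z) (t : term) : Z :=
  match t with
  | tvar n => e n
  | tzero => 0
  | tplus a b => teval e a + teval e b
  end.

Definition P2 (r x : Z) : Prop := (exists z : Z, x = z * z) /\ ~ (r | x)%Z.

Definition scons (z : Z) (e : nat -> Z) : nat -> Z :=
  fun n => match n with O => z | S m => e m end.

(* Satisfaction in C_r = (Z; 0, +, <=, P_2^r) (the formula does not use <=). *)
Fixpoint sat (r : Z) (e : nat -> Z) (f : pef) : Prop :=
  match f with
  | feq a b => teval e a = teval e b
  | fR2 a => P2 r (teval e a)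
  | fand f g => sat r e f /\ sat r e g
  | for_ f g => sat r e f \/ sat r e g
  | fex f => exists z : Z, sat r (scons z e) f
  end.

(* Main.v *)
Require Import Defs.
From Stdlib Require Import ZArith Znumtheory List Lia Classical.
Import ListNotations.
Open Scope Z_scope.

Definition FS (n : Z) : Prop := exists a b c d : Z, n = a*a + b*b + c*c + d*d.

Lemma euler a1 a2 a3 a4 b1 b2 b3 b4 :
  (a1*a1+a2*a2+a3*a3+a4*a4)*(b1*b1+b2*b2+b3*b3+b4*b4) =
  (a1*b1 + a2*b2 + a3*b3 + a4*b4)*(a1*b1 + a2*b2 + a3*b3 + a4*b4)
  + (-a1*b2 + a2*b1 - a3*b4 + a4*b3)*(-a1*b2 + a2*b1 - a3*b4 + a4*b3)
  + (-a1*b3 + a2*b4 + a3*b1 - a4*b2)*(-a1*b3 + a2*b4 + a3*b1 - a4*b2)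
  + (-a1*b4 - a2*b3 + a3*b2 + a4*b1)*(-a1*b4 - a2*b3 + a3*b2 + a4*b1).
Proof. ring. Qed.

Lemma FS_mul m n : FS m -> FS n -> FS (m*n).
Proof.
  intros [a1 [a2 [a3 [a4 H1]]]] [b1 [b2 [b3 [b4 H2]]]]; subst.
  rewrite euler. do 4 eexists. reflexivity.
Qed.

Lemma center (x m : Z) : 0 < m -> exists y k, x = y + m*k /\ -m < 2*y /\ 2*y <= m.
Proof.
  intros Hm. pose proof (Z.div_mod x m ltac:(lia)). pose proof (Z.mod_pos_bound x m Hm).
  destruct (Z_le_gt_dec (2 * (x mod m)) m).
  - exists (x mod m), (x / m). lia.
  - exists (x mod m - m), (x / m + 1). lia.
Qed.

Lemma small_div p a : 0 < p -> (p | a) -> -p < a < p -> a = 0.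
Proof. intros Hp [c Hc] Hb. subst. destruct (Z.lt_trichotomy c 0) as [H|[H|H]]; [nia|subst; lia|nia]. Qed.

Lemma not_div_prime p m : prime p -> 1 < m < p -> ~ (m | p).
Proof. intros Hp Hm Hd. destruct (prime_divisors p Hp m Hd) as [H|[H|[H|H]]]; lia. Qed.

Lemma sq4 y m : -m < 2*y -> 2*y <= m -> 4*(y*y) <= m*m.
Proof. intros. assert (0 <= (m - 2*y)*(m+2*y)) by (apply Z.mul_nonneg_nonneg; lia). nia. Qed.

Lemma sq4eq y m : -m < 2*y -> 4*(y*y) = m*m -> 2*y = m.
Proof. intros. assert ((2*y - m)*(2*y+m) = 0) by nia.
  apply Z.mul_eq_0 in H1. lia. Qed.

Lemma descent p m x1 x2 x3 x4 : prime p -> 1 < m < p ->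
  m*p = x1*x1 + x2*x2 + x3*x3 + x4*x4 -> exists r, 0 < r < m /\ FS (r*p).
Proof.
  intros Hp Hm Hs.
  destruct (center x1 m ltac:(lia)) as [y1 [k1 [E1 B1]]].
  destruct (center x2 m ltac:(lia)) as [y2 [k2 [E2 B2]]].
  destruct (center x3 m ltac:(lia)) as [y3 [k3 [E3 B3]]].
  destruct (center x4 m ltac:(lia)) as [y4 [k4 [E4 B4]]].
  set (r := p - 2*(x1*k1+x2*k2+x3*k3+x4*k4) + m*(k1*k1+k2*k2+k3*k3+k4*k4)).
  assert (HS : y1*y1+y2*y2+y3*y3+y4*y4 = m*r).
  { unfold r. assert (y1 = x1 - m*k1) by lia. assert (y2 = x2 - m*k2) by lia.
    assert (y3 = x3 - m*k3) by lia. assert (y4 = x4 - m*k4) by lia.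
    assert (Hs' : m*p = x1*x1 + x2*x2 + x3*x3 + x4*x4) by exact Hs.
    subst y1 y2 y3 y4. clear E1 E2 E3 E4 r.
    transitivity (x1*x1 + x2*x2 + x3*x3 + x4*x4 - 2*m*(x1*k1+x2*k2+x3*k3+x4*k4) + m*m*(k1*k1+k2*k2+k3*k3+k4*k4)); [ring|].
    rewrite <- Hs'. ring. }
  pose proof (sq4 y1 m (proj1 B1) (proj2 B1)) as Q1.
  pose proof (sq4 y2 m (proj1 B2) (proj2 B2)) as Q2.
  pose proof (sq4 y3 m (proj1 B3) (proj2 B3)) as Q3.
  pose proof (sq4 y4 m (proj1 B4) (proj2 B4)) as Q4.
  pose proof (Z.square_nonneg y1). pose proof (Z.square_nonneg y2).
  pose proof (Z.square_nonneg y3). pose proof (Z.square_nonneg y4).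
  assert (Hr0 : 0 <= r).
  { destruct (Z_lt_le_dec r 0); [|lia]. assert (m*r < 0) by (apply Z.mul_pos_neg; lia). lia. }
  assert (Hrm : r <= m).
  { destruct (Z_le_gt_dec r m); [lia|]. assert (m*r > m*m) by (apply Zmult_gt_compat_l; lia). lia. }
  destruct (Z.eq_dec r 0) as [R0|R0].
  { exfalso. rewrite R0, Z.mul_0_r in HS.
    assert (y1*y1 = 0) by lia. assert (y2*y2 = 0) by lia. assert (y3*y3 = 0) by lia. assert (y4*y4 = 0) by lia.
    assert (y1 = 0) by (apply Z.mul_eq_0 in H3; lia).
    assert (y2 = 0) by (apply Z.mul_eq_0 in H4; lia).
    assert (y3 = 0) by (apply Z.mul_eq_0 in H5; lia).
    assert (y4 = 0) by (apply Z.mul_eq_0 in H6; lia).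
    subst. apply (not_div_prime p m Hp Hm).
    exists (k1*k1+k2*k2+k3*k3+k4*k4). apply (Z.mul_reg_l _ _ m); [lia|].
    rewrite Hs. ring. }
  destruct (Z.eq_dec r m) as [Rm|Rm].
  { exfalso. rewrite Rm in HS.
    assert (Z1 : 4*(y1*y1) = m*m) by lia.
    assert (Z2 : 4*(y2*y2) = m*m) by lia.
    assert (Z3 : 4*(y3*y3) = m*m) by lia.
    assert (Z4 : 4*(y4*y4) = m*m) by lia.
    pose proof (sq4eq y1 m (proj1 B1) Z1) as W1. pose proof (sq4eq y2 m (proj1 B2) Z2) as W2.
    pose proof (sq4eq y3 m (proj1 B3) Z3) as W3. pose proof (sq4eq y4 m (proj1 B4) Z4) as W4.
    apply (not_div_prime p m Hp Hm).
    exists (1 + (k1+k1*k1) + (k2+k2*k2) + (k3+k3*k3) + (k4+k4*k4)).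
    apply (Z.mul_reg_l _ _ (2*2*m)); [lia|].
    replace (2*2*m*p) with (2*2*(m*p)) by ring.
    rewrite Hs, E1, E2, E3, E4.
    transitivity ((2*y1)*(2*y1) + (2*y2)*(2*y2) + (2*y3)*(2*y3) + (2*y4)*(2*y4)
      + 4*m*((2*y1)*k1 + (2*y2)*k2 + (2*y3)*k3 + (2*y4)*k4)
      + 4*m*m*(k1*k1+k2*k2+k3*k3+k4*k4)); [ring|].
    rewrite W1, W2, W3, W4. ring. }
  exists r. split; [lia|].
  exists (p - (x1*k1+x2*k2+x3*k3+x4*k4)), (x1*k2 - x2*k1 + x3*k4 - x4*k3),
         (x1*k3 - x2*k4 - x3*k1 + x4*k2), (x1*k4 + x2*k3 - x3*k2 - x4*k1).
  apply (Z.mul_reg_l _ _ (m*m)); [nia|].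
  assert (Heu := euler x1 x2 x3 x4 y1 y2 y3 y4).
  rewrite <- Hs, HS in Heu.
  assert (y1 = x1 - m*k1) by lia. assert (y2 = x2 - m*k2) by lia.
  assert (y3 = x3 - m*k3) by lia. assert (y4 = x4 - m*k4) by lia.
  replace (m*m*(r*p)) with (m*p*(m*r)) by ring. rewrite Heu.
  subst y1 y2 y3 y4.
  transitivity ((m*p - m*(x1*k1+x2*k2+x3*k3+x4*k4))*(m*p - m*(x1*k1+x2*k2+x3*k3+x4*k4))
    + m*m*((x1*k2 - x2*k1 + x3*k4 - x4*k3)*(x1*k2 - x2*k1 + x3*k4 - x4*k3))
    + m*m*((x1*k3 - x2*k4 - x3*k1 + x4*k2)*(x1*k3 - x2*k4 - x3*k1 + x4*k2))
    + m*m*((x1*k4 + x2*k3 - x3*k2 - x4*k1)*(x1*k4 + x2*k3 - x3*k2 - x4*k1))).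
  - rewrite Hs. ring.
  - ring.
Qed.

Lemma mod_eq_div p a b : 0 < p -> a mod p = b mod p -> (p | a - b).
Proof.
  intros Hp E. pose proof (Z.div_mod a p ltac:(lia)). pose proof (Z.div_mod b p ltac:(lia)).
  exists (a/p - b/p). lia.
Qed.

Lemma pigeon p h : prime p -> p = 2*h+1 -> 0 <= h ->
  exists x y, 0 <= x <= h /\ 0 <= y <= h /\ (p | x*x + y*y + 1).
Proof.
  intros Hp Eh Hh. assert (Hp1 : 1 < p) by (destruct Hp; lia).
  apply NNPP. intro Hn.
  set (L := seq 0 (S (Z.to_nat h))).
  set (f := fun i : nat => (Z.of_nat i * Z.of_nat i) mod p).
  set (g := fun i : nat => (-1 - Z.of_nat i * Z.of_nat i) mod p).
  assert (HL : forall i, In i L -> 0 <= Z.of_nat i <= h).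
  { intros i Hi. unfold L in Hi. apply in_seq in Hi. lia. }
  assert (N1 : NoDup (map f L)).
  { apply NoDup_map_NoDup_ForallPairs; [|apply seq_NoDup].
    intros i j Hi Hj E. apply HL in Hi. apply HL in Hj. unfold f in E.
    apply mod_eq_div in E; [|lia].
    replace (Z.of_nat i * Z.of_nat i - Z.of_nat j * Z.of_nat j) with
      ((Z.of_nat i - Z.of_nat j) * (Z.of_nat i + Z.of_nat j)) in E by ring.
    destruct (prime_mult p Hp _ _ E) as [D|D]; apply small_div in D; lia. }
  assert (N2 : NoDup (map g L)).
  { apply NoDup_map_NoDup_ForallPairs; [|apply seq_NoDup].
    intros i j Hi Hj E. apply HL in Hi. apply HL in Hj. unfold g in E.
    apply mod_eq_div in E; [|lia].
    replace (-1 - Z.of_nat i * Z.of_nat i - (-1 - Z.of_nat j * Z.of_nat j)) with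
      ((Z.of_nat j - Z.of_nat i) * (Z.of_nat j + Z.of_nat i)) in E by ring.
    destruct (prime_mult p Hp _ _ E) as [D|D]; apply small_div in D; lia. }
  assert (N : NoDup (map f L ++ map g L)).
  { apply NoDup_app; auto. intros a Ha Hb.
    apply in_map_iff in Ha. destruct Ha as [i [Ei Hi]].
    apply in_map_iff in Hb. destruct Hb as [j [Ej Hj]].
    apply HL in Hi. apply HL in Hj. subst a. unfold f, g in Ej.
    apply mod_eq_div in Ej; [|lia]. apply Hn. exists (Z.of_nat j), (Z.of_nat i).
    split; [lia|]. split; [lia|].
    replace (Z.of_nat j * Z.of_nat j + Z.of_nat i * Z.of_nat i + 1) with
      ((-1 - Z.of_nat j * Z.of_nat j - Z.of_nat i * Z.of_nat i) * (-1)) by ring.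
    apply Z.divide_mul_l. exact Ej. }
  assert (I : incl (map f L ++ map g L) (map Z.of_nat (seq 0 (Z.to_nat p)))).
  { intros a Ha. assert (Hb : 0 <= a < p).
    { apply in_app_or in Ha. destruct Ha as [Ha|Ha]; apply in_map_iff in Ha;
      destruct Ha as [i [Ei _]]; subst a; apply Z.mod_pos_bound; lia. }
    apply in_map_iff. exists (Z.to_nat a). split; [lia|]. apply in_seq. lia. }
  pose proof (NoDup_incl_length N I) as Hlen.
  rewrite length_app, !length_map, length_seq in Hlen. unfold L in Hlen.
  rewrite length_seq in Hlen. lia.
Qed.

Lemma FS_odd_prime p h : prime p -> p = 2*h+1 -> 0 <= h -> FS p.
Proof.
  intros Hp Eh Hh. assert (Hp1 : 1 < p) by (destruct Hp; lia).
  destruct (pigeon p h Hp Eh Hh) as [x [y [Hx [Hy [m Hm]]]]].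
  assert (Hm0 : 0 < m) by nia.
  assert (Hmp : m < p) by nia.
  assert (Hfs : FS (m*p)) by (exists x, y, 1, 0; lia).
  clear Hm x y Hx Hy.
  assert (Hm0' : 0 <= m) by lia. revert Hm0 Hmp Hfs. pattern m. revert m Hm0'.
  apply Z_lt_induction.
  intros m' IH Hm0 Hmp Hfs.
  destruct (Z.eq_dec m' 1) as [E|E]. { subst. rewrite Z.mul_1_l in Hfs. exact Hfs. }
  destruct Hfs as [a [b [c [d Habcd]]]].
  destruct (descent p m' a b c d Hp ltac:(lia) Habcd) as [r [Hr Hfr]].
  apply (IH r); lia || exact Hfr.
Qed.

Lemma FS_all n : 0 <= n -> FS n.
Proof.
  intro H0. revert H0. pattern n. revert n.
  intro n0. intro H0. apply (Z_lt_induction (fun n => 0 <= n -> FS n)); [|exact H0|exact H0].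
  clear n0 H0. intros n IH' H0.
  assert (IH : forall y, 0 <= y < n -> FS y) by (intros; apply IH'; lia).
  destruct (Z_lt_le_dec n 2) as [Hs|Hs].
  { destruct (Z.eq_dec n 0); [subst; exists 0,0,0,0; lia|].
    destruct (Z.eq_dec n 1); [subst; exists 1,0,0,0; lia|].
    destruct (Z_lt_le_dec n 0) as [Hneg|Hneg].
    - lia.
    - lia. }
  destruct (prime_dec n) as [Hp|Hp].
  - destruct (Z.eq_dec n 2) as [E|E]; [subst; exists 1,1,0,0; lia|].
    destruct (Zeven_odd_dec n) as [Ev|Od].
    + exfalso. apply Zeven_ex in Ev. destruct Ev as [h Eh].
      assert (D : (2 | n)) by (exists h; lia).
      destruct (prime_divisors n Hp 2 D) as [X|[X|[X|X]]]; lia.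
    + apply Zodd_ex in Od. destruct Od as [h Eh].
      apply (FS_odd_prime n h Hp Eh). lia.
  - destruct (not_prime_divide n ltac:(lia) Hp) as [a [Ha [b Hb]]].
    rewrite Hb. apply FS_mul; apply IH; nia.
Qed.
Definition good (r s : Z) : Prop := s = 0 \/ P2 r s.

Definition G (k : nat) : pef := for_ (feq (tvar k) tzero) (fR2 (tvar k)).
Fixpoint sumv (k : nat) : term := match k with O => tzero | S k => tplus (tvar k) (sumv k) end.
Fixpoint allG (k : nat) : pef := match k with O => feq tzero tzero | S k => fand (G k) (allG k) end.
Fixpoint exn (k : nat) (f : pef) : pef := match k with O => f | S k => fex (exn k f) end.
Definition phi : pef :=
  exn 16 (fand (feq (tplus (tplus (tvar 16) (tvar 16)) (sumv 16)) (tplus (tvar 17) (tvar 17))) (allG 16)).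

Definition ext (k : nat) (w e : nat -> Z) : nat -> Z :=
  fun n => if Nat.ltb n k then w n else e (n - k)%nat.

Lemma teval_ext e e' t : (forall n, e n = e' n) -> teval e t = teval e' t.
Proof. intros H; induction t; simpl; congruence. Qed.

Lemma sat_ext r f : forall e e', (forall n, e n = e' n) -> (sat r e f <-> sat r e' f).
Proof.
  induction f; intros e e' H; simpl.
  - rewrite (teval_ext e e' t H), (teval_ext e e' t0 H). tauto.
  - rewrite (teval_ext e e' t H). tauto.
  - rewrite (IHf1 e e' H), (IHf2 e e' H). tauto.
  - rewrite (IHf1 e e' H), (IHf2 e e' H). tauto.
  - split; intros [z Hz]; exists z; [rewrite <- (IHf (scons z e) (scons z e'))|rewrite (IHf (scons z e) (scons z e'))];
      auto; intros [|n]; simpl; auto.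
Qed.

Lemma ext_S k w z e n :
  ext k w (scons z e) n = ext (S k) (fun m => if Nat.ltb m k then w m else z) e n.
Proof.
  unfold ext, scons.
  destruct (Nat.ltb_spec n k) as [H1|H1].
  - rewrite (proj2 (Nat.ltb_lt n (S k))) by lia. reflexivity.
  - destruct (Nat.eq_dec n k) as [E|E].
    + subst. rewrite (proj2 (Nat.ltb_lt k (S k))) by lia.
      replace (k - k)%nat with O by lia. reflexivity.
    + rewrite (proj2 (Nat.ltb_ge n (S k))) by lia.
      destruct (n - k)%nat eqn:E2; [lia|]. f_equal. lia.
Qed.

Lemma ext_S' k w e n :
  ext k w (scons (w k) e) n = ext (S k) w e n.
Proof.
  unfold ext, scons.
  destruct (Nat.ltb_spec n k); destruct (Nat.ltb_spec n (S k)); try lia; auto.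
  - assert (n = k) by lia. subst. replace (k - k)%nat with O by lia. reflexivity.
  - destruct (n - k)%nat eqn:E2; [lia|]. f_equal. lia.
Qed.

Lemma sat_exn r f k : forall e, sat r e (exn k f) <-> exists w, sat r (ext k w e) f.
Proof.
  induction k; intros e; simpl.
  - split.
    + intros H. exists (fun _ => 0). apply (proj1 (sat_ext r f e (ext 0 (fun _ => 0) e) (fun n => ltac:(unfold ext; destruct n; reflexivity)))). exact H.
    + intros [w H]. apply (proj2 (sat_ext r f e (ext 0 w e) (fun n => ltac:(unfold ext; destruct n; reflexivity)))). exact H.
  - split.
    + intros [z Hz]. apply IHk in Hz. destruct Hz as [w Hw].
      eexists. apply (proj1 (sat_ext r f _ _ (ext_S k w z e))). exact Hw.
    + intros [w Hw]. exists (w k). apply IHk. exists w.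
      apply (proj2 (sat_ext r f _ _ (ext_S' k w e))). exact Hw.
Qed.

Fixpoint sumw (w : nat -> Z) (k : nat) : Z := match k with O => 0 | S k => w k + sumw w k end.

Lemma teval_sumv e k : teval e (sumv k) = sumw e k.
Proof. induction k; simpl; auto. rewrite IHk. reflexivity. Qed.

Lemma sat_allG r e k : sat r e (allG k) <-> forall i, (i < k)%nat -> good r (e i).
Proof.
  induction k; simpl.
  - split; [intros; lia|auto].
  - rewrite IHk. unfold good. split.
    + intros [H1 H2] i Hi. destruct (Nat.eq_dec i k); [subst; exact H1|]. apply H2. lia.
    + intros H. split; [apply (H k); lia|]. intros i Hi. apply H. lia.
Qed.

Lemma good_nonneg r s : good r s -> 0 <= s.
Proof. intros [H|[[z Hz] _]]; [lia|subst; apply Z.square_nonneg]. Qed.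

Lemma sumw_nonneg r w k : (forall i, (i < k)%nat -> good r (w i)) -> 0 <= sumw w k.
Proof.
  induction k; simpl; intros H; [lia|].
  pose proof (good_nonneg r (w k) (H k ltac:(lia))). pose proof (IHk (fun i Hi => H i ltac:(lia))). lia.
Qed.

Lemma good1 r : 2 <= r -> good r 1.
Proof. intros Hr. right. split; [exists 1; lia|]. intros [c Hc]. destruct (Z_le_gt_dec c 0); nia. Qed.

Lemma good0 r : good r 0.
Proof. left; reflexivity. Qed.

Lemma group r z : 2 <= r -> exists a b c d, good r a /\ good r b /\ good r c /\ good r d /\
   a + b + c + d = 2*(z*z) + 2.
Proof.
  intros Hr. destruct (classic (r | z*z)) as [D|D].
  - assert (K : forall u, (u = 1 \/ u = -1) -> ~ (r | (z+u)*(z+u))).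
    { intros u Hu [b Hb]. destruct D as [a Ha].
      assert (E : (z+u)*(z+u) - z*z = 2*u*z + 1) by (destruct Hu; subst; ring).
      assert (Hc : 2*u*z+1 = (b - a)*r) by lia.
      set (c := b - a) in *.
      assert (E1 : 1 = r * (2*c - c*c*r + 4*a)).
      { assert (2*u*z*(2*u*z) = 4*(z*z)) by (destruct Hu; subst; ring).
        assert (1 = 2*(2*u*z+1) - (2*u*z+1)*(2*u*z+1) + 4*(z*z)) by nia.
        rewrite Hc, Ha in H0. rewrite H0 at 1. ring. }
      set (K0 := 2*c - c*c*r + 4*a) in E1. destruct (Z_le_gt_dec K0 0); nia. }
    exists ((z+1)*(z+1)), ((z+ -1)*(z+ -1)), 0, 0.
    split; [right; split; [exists (z+1); ring| apply K; auto]|].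
    split; [right; split; [exists (z+ -1); ring| apply K; auto]|].
    split; [apply good0|]. split; [apply good0|]. ring.
  - exists (z*z), (z*z), 1, 1.
    split; [right; split; [exists z; ring|exact D]|].
    split; [right; split; [exists z; ring|exact D]|].
    split; [apply good1; lia|]. split; [apply good1; lia|]. ring.
Qed.

Definition lw (l : list Z) : nat -> Z := fun i => nth i l 0.

Lemma complete r n : 2 <= r -> 0 <= n -> exists w, (forall i, (i < 16)%nat -> good r (w i)) /\ sumw w 16 = 2*n.
Proof.
  intros Hr Hn. pose proof (good0 r) as G0. pose proof (good1 r Hr) as G1.
  destruct (Z_lt_le_dec n 4) as [Hs|Hs].
  - assert (E : n = 0 \/ n = 1 \/ n = 2 \/ n = 3) by lia.
    destruct E as [E|[E|[E|E]]]; subst.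
    + exists (lw [0;0;0;0;0;0;0;0;0;0;0;0;0;0;0;0]). split; [|reflexivity].
      intros i Hi; do 16 (destruct i as [|i]; [assumption|]); lia.
    + exists (lw [1;1;0;0;0;0;0;0;0;0;0;0;0;0;0;0]). split; [|reflexivity].
      intros i Hi; do 16 (destruct i as [|i]; [assumption|]); lia.
    + exists (lw [1;1;1;1;0;0;0;0;0;0;0;0;0;0;0;0]). split; [|reflexivity].
      intros i Hi; do 16 (destruct i as [|i]; [assumption|]); lia.
    + exists (lw [1;1;1;1;1;1;0;0;0;0;0;0;0;0;0;0]). split; [|reflexivity].
      intros i Hi; do 16 (destruct i as [|i]; [assumption|]); lia.
  - destruct (FS_all (n - 4) ltac:(lia)) as [z1 [z2 [z3 [z4 Hz]]]].
    destruct (group r z1 Hr) as [a1 [b1 [c1 [d1 [A1 [B1 [C1 [D1 S1]]]]]]]].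
    destruct (group r z2 Hr) as [a2 [b2 [c2 [d2 [A2 [B2 [C2 [D2 S2]]]]]]]].
    destruct (group r z3 Hr) as [a3 [b3 [c3 [d3 [A3 [B3 [C3 [D3 S3]]]]]]]].
    destruct (group r z4 Hr) as [a4 [b4 [c4 [d4 [A4 [B4 [C4 [D4 S4]]]]]]]].
    exists (lw [a1;b1;c1;d1;a2;b2;c2;d2;a3;b3;c3;d3;a4;b4;c4;d4]). split.
    + intros i Hi; do 16 (destruct i as [|i]; [assumption|]); lia.
    + unfold lw. cbn [sumw nth]. lia.
Qed.

Theorem proposition1p4 :
  exists phi : pef,
    forall r : Z, 2 <= r ->
      forall e : nat -> Z, sat r e phi <-> e 0%nat <= e 1%nat.
Proof.
  exists phi. intros r Hr e. unfold phi. rewrite sat_exn.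
  assert (E16 : ext 16 = ext 16) by reflexivity.
  split.
  - intros [w Hw]. cbn [sat teval] in Hw. destruct Hw as [Heq Hg].
    rewrite teval_sumv in Heq. pose proof (proj1 (sat_allG r (ext 16 w e) 16) Hg) as Hg2. clear Hg. rename Hg2 into Hg.
    assert (Hs : 0 <= sumw (ext 16 w e) 16) by (apply (sumw_nonneg r); exact Hg).
    assert (X0 : ext 16 w e 16 = e 0%nat) by reflexivity.
    assert (X1 : ext 16 w e 17 = e 1%nat) by reflexivity.
    rewrite X0, X1 in Heq. lia.
  - intros Hle. destruct (complete r (e 1%nat - e 0%nat) Hr ltac:(lia)) as [w [Hg Hs]].
    exists w. cbn [sat teval]. split.
    + rewrite teval_sumv.
      assert (X0 : ext 16 w e 16 = e 0%nat) by reflexivity.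
      assert (X1 : ext 16 w e 17 = e 1%nat) by reflexivity.
      assert (sumw (ext 16 w e) 16 = sumw w 16) as ->.
      { unfold ext. cbn [sumw Nat.ltb Nat.leb]. reflexivity. }
      rewrite X0, X1. lia.
    + apply (proj2 (sat_allG _ _ _)). intros i Hi. unfold ext. rewrite (proj2 (Nat.ltb_lt i 16) Hi). apply Hg; auto.
Qed.
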